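(* Let $\mathcal{X}$ be a nonempty convex subset of $\mathbb{R}^n$ and $\mathbf{F}:\mathcal{X}\to I(\mathbb{R})$ a convex interval-valued function. If $\mathbf{F}$ is $gH$-differentiable at $\bar{x}\in\mathcal{X}$, then $\partial\mathbf{F}(\bar{x})=\{\nabla\mathbf{F}(\bar{x})\}$.
   Context: $I(\mathbb{R})$: nonempty compact intervals $\mathbf{A}=[\underline{a},\overline{a}]$; $\mathbf{A}\oplus\mathbf{B}=[\underline{a}+\underline{b},\overline{a}+\overline{b}]$; $\lambda\odot\mathbf{A}=[\min\{\lambda\underline{a},\lambda\overline{a}\},\max\{\lambda\underline{a},\lambda\overline{a}\}]$; $\mathbf{A}\ominus_{gH}\mathbf{B}=[\min\{\underline{a}-\underline{b},\overline{a}-\overline{b}\},\max\{\underline{a}-\underline{b},\overline{a}-\overline{b}\}]$; $\mathbf{0}=[0,0]$; $\mathbf{A}\preceq\mathbf{B}$ iff $\underline{a}\le\underline{b}$ and $\overline{a}\le\overline{b}$; limits w.r.t. $\|\mathbf{A}\|_{I(\mathbb{R})}=\max\{|\underline{a}|,|\overline{a}|\}$. $d^T\odot\widehat{\mathbf{A}}=\bigoplus_{i}d_i\odot\mathbf{A}_i$ for $d\in\mathbb{R}^n$, $\widehat{\mathbf{A}}\in I(\mathbb{R})^n$. Convex IVF: $\mathbf{F}(\lambda x_1+(1-\lambda)x_2)\preceq\lambda\odot\mathbf{F}(x_1)\oplus(1-\lambda)\odot\mathbf{F}(x_2)$. $gH$-derivative of a one-variable IVF: $\mathbf{G}'(t)=\lim_{s\to0}\frac1s\odot(\mathbf{G}(t+s)\ominus_{gH}\mathbf{G}(t))$;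 $D_i\mathbf{F}(\bar{x})$ is the $gH$-derivative at $\bar{x}_i$ of $x_i\mapsto\mathbf{F}(\bar{x}_1,\dots,x_i,\dots,\bar{x}_n)$; $\nabla\mathbf{F}(\bar{x})=(D_1\mathbf{F}(\bar{x}),\dots,D_n\mathbf{F}(\bar{x}))^T$. $\mathbf{F}$ is $gH$-differentiable at $\bar{x}$ if there exist $\widehat{\mathbf{A}}\in I(\mathbb{R})^n$, an interval-valued $\mathbf{E}(\mathbf{F}(\bar{x});d)\to\mathbf{0}$ as $\|d\|\to0$, and $\delta>0$ with $\mathbf{F}(\bar{x}+d)\ominus_{gH}\mathbf{F}(\bar{x})=d^T\odot\widehat{\mathbf{A}}\oplus\|d\|\odot\mathbf{E}(\mathbf{F}(\bar{x});d)$ for $\|d\|<\delta$. $gH$-subgradient at $\bar{x}$: $\widehat{\mathbf{G}}\in I(\mathbb{R})^n$ with $(x-\bar{x})^T\odot\widehat{\mathbf{G}}\preceq\mathbf{F}(x)\ominus_{gH}\mathbf{F}(\bar{x})$ for all $x\in\mathcal{X}$; $\partial\mathbf{F}(\bar{x})$ is the set of all of them. *)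

(* Defs.v *)
From mathcomp Require Import all_boot all_order all_algebra.
From mathcomp Require Import reals.
Set Implicit Arguments. Unset Strict Implicit. Unset Printing Implicit Defensive.
Import Order.TTheory GRing.Theory Num.Theory.
Local Open Scope ring_scope.

Section IntervalArith.
Variable R : realType.

Record itv := Itv { ilo : R; ihi : R; ileq : ilo <= ihi }.

Lemma min_le_max (a b : R) : Order.min a b <= Order.max a b.
Proof. by case: (leP a b) => h //; rewrite ltW. Qed.

Definition itv_mm (a b : R) : itv := Itv (min_le_max a b).

Definition izero : itv := Itv (lexx (0 : R)).

Definition iadd (A B : itv) : itv := Itv (lerD (ileq A) (ileq B)).

Definition iscale (l : R) (A : itv) : itv := itv_mm (l * ilo A) (l * ihi A).

Definition igH (A B : itv) : itv := itv_mm (ilo A - ilo B) (ihi A - ihi B).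

Definition inorm (A : itv) : R := Order.max `|ilo A| `|ihi A|.

Definition ile (A B : itv) : Prop := ilo A <= ilo B /\ ihi A <= ihi B.

End IntervalArith.

Arguments izero {R}.

Section IVF.
Variables (R : realType) (n : nat).
Notation vec := 'rV[R]_n.

Definition enorm (d : vec) : R := Num.sqrt (\sum_(i < n) d ord0 i ^+ 2).

Definition idot (d : vec) (A : 'I_n -> itv R) : itv R :=
  \big[@iadd R/izero]_(i < n) iscale (d ord0 i) (A i).

Definition convex_set (X : vec -> Prop) : Prop :=
  forall x1 x2 (l : R), X x1 -> X x2 -> 0 <= l <= 1 ->
    X (l *: x1 + (1 - l) *: x2).

Definition convex_ivf (X : vec -> Prop) (F : vec -> itv R) : Prop :=
  forall x1 x2 (l : R), X x1 -> X x2 -> 0 <= l <= 1 ->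
    ile (F (l *: x1 + (1 - l) *: x2))
        (iadd (iscale l (F x1)) (iscale (1 - l) (F x2))).

Definition gH_differentiable (X : vec -> Prop) (F : vec -> itv R) (xb : vec)
  : Prop :=
  exists (Ahat : 'I_n -> itv R) (E : vec -> itv R) (delta : R),
    [/\ 0 < delta,
        (forall eps : R, 0 < eps -> exists eta : R, 0 < eta /\
           forall d : vec, 0 < enorm d < eta -> inorm (E d) < eps)
      & forall d : vec, enorm d < delta ->
          X (xb + d) /\
          igH (F (xb + d)) (F xb) = iadd (idot d Ahat) (iscale (enorm d) (E d))].

Definition gH_partial (X : vec -> Prop) (F : vec -> itv R) (xb : vec)
  (i : 'I_n) (A : itv R) : Prop :=
  forall eps : R, 0 < eps -> exists eta : R, 0 < eta /\
    forall s : R, 0 < `|s| < eta -> X (xb + s *: delta_mx ord0 i) ->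
      inorm (igH (iscale s^-1 (igH (F (xb + s *: delta_mx ord0 i)) (F xb))) A)
        < eps.

Definition gH_gradient (X : vec -> Prop) (F : vec -> itv R) (xb : vec)
  (g : 'I_n -> itv R) : Prop :=
  forall i, gH_partial X F xb i (g i).

Definition gH_subgradient (X : vec -> Prop) (F : vec -> itv R) (xb : vec)
  (G : 'I_n -> itv R) : Prop :=
  forall x, X x -> ile (idot (x - xb) G) (igH (F x) (F xb)).

End IVF.

(* Main.v *)
Require Import Defs.
From mathcomp Require Import all_boot all_order all_algebra.
From mathcomp Require Import reals ring lra.
From Stdlib Require Import FunctionalExtensionality.
Import Order.TTheory GRing.Theory Num.Theory.
Local Open Scope ring_scope.

Lemma iscale_pos (R : realType) (l : R) (A : itv R) : 0 <= l ->
  ilo (iscale l A) = l * ilo A /\ ihi (iscale l A) = l * ihi A.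
Proof.
move=> hl; have h : l * ilo A <= l * ihi A by rewrite ler_wpM2l // ileq.
by rewrite /= min_l // max_r.
Qed.

Lemma iscale_neg (R : realType) (l : R) (A : itv R) : l <= 0 ->
  ilo (iscale l A) = l * ihi A /\ ihi (iscale l A) = l * ilo A.
Proof.
move=> hl; have h : l * ihi A <= l * ilo A by rewrite ler_wnM2l // ileq.
by rewrite /= min_r // max_l.
Qed.

Lemma inorm_igH (R : realType) (A B : itv R) (e : R) :
  inorm (igH A B) < e <-> `|ilo A - ilo B| < e /\ `|ihi A - ihi B| < e.
Proof.
rewrite /inorm gt_max /=; case: (leP (ilo A - ilo B) (ihi A - ihi B)) => h.
  by split => [/andP[] | [] -> ->].
by split => [/andP[] -> -> | [] -> ->].
Qed.

Lemma itv_eq (R : realType) (A B : itv R) :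
  ilo A = ilo B -> ihi A = ihi B -> A = B.
Proof.
case: A => a1 a2 ha; case: B => b1 b2 hb /= e1 e2; subst.
by rewrite (eq_irrelevance ha hb).
Qed.

Lemma idot_lo (R : realType) n (d : 'rV[R]_n) (A : 'I_n -> itv R) :
  ilo (idot d A) = \sum_(i < n) ilo (iscale (d ord0 i) (A i)).
Proof. by rewrite /idot (big_morph (@ilo R) (id1 := 0) (op1 := +%R)). Qed.

Lemma idot_hi (R : realType) n (d : 'rV[R]_n) (A : 'I_n -> itv R) :
  ihi (idot d A) = \sum_(i < n) ihi (iscale (d ord0 i) (A i)).
Proof. by rewrite /idot (big_morph (@ihi R) (id1 := 0) (op1 := +%R)). Qed.

Lemma axis_entry (R : realType) n (s : R) (i j : 'I_n) :
  (s *: delta_mx ord0 i : 'rV[R]_n) ord0 j = if j == i then s else 0.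
Proof. by rewrite !mxE eqxx /=; case: eqP => _; rewrite ?mulr1 ?mulr0. Qed.

Lemma idot_axis (R : realType) n (s : R) (i : 'I_n) (A : 'I_n -> itv R) :
  ilo (idot (s *: delta_mx ord0 i) A) = ilo (iscale s (A i)) /\
  ihi (idot (s *: delta_mx ord0 i) A) = ihi (iscale s (A i)).
Proof.
rewrite idot_lo idot_hi; split; rewrite (bigD1 i) //= axis_entry eqxx.
  rewrite big1 ?addr0 // => j /negbTE hj; rewrite axis_entry hj.
  by rewrite /iscale /itv_mm /ilo !mul0r minxx.
rewrite big1 ?addr0 // => j /negbTE hj; rewrite axis_entry hj.
by rewrite /iscale /itv_mm /ihi !mul0r maxxx.
Qed.

Lemma idot_scale (R : realType) n (t : R) (d : 'rV[R]_n) (A : 'I_n -> itv R) :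
  0 <= t ->
  ilo (idot (t *: d) A) = t * ilo (idot d A) /\
  ihi (idot (t *: d) A) = t * ihi (idot d A).
Proof.
move=> ht; rewrite !idot_lo !idot_hi !mulr_sumr; split; apply: eq_bigr => j _;
rewrite /= mxE -!mulrA.
  by rewrite minr_pMr.
by rewrite maxr_pMr.
Qed.

Lemma enorm_axis (R : realType) n (s : R) (i : 'I_n) :
  enorm (s *: delta_mx ord0 i) = `|s|.
Proof.
rewrite /enorm (bigD1 i) //= axis_entry eqxx big1 ?addr0 ?sqrtr_sqr //.
by move=> j /negbTE hj; rewrite axis_entry hj expr0n.
Qed.

Lemma enorm_scale (R : realType) n (t : R) (d : 'rV[R]_n) :
  0 <= t -> enorm (t *: d) = t * enorm d.
Proof.
move=> ht; rewrite /enorm.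
under eq_bigr do rewrite mxE exprMn.
by rewrite -mulr_sumr sqrtrM ?sqr_ge0 // sqrtr_sqr ger0_norm.
Qed.

Lemma ilo_iadd (R : realType) (P Q : itv R) : ilo (iadd P Q) = ilo P + ilo Q.
Proof. by []. Qed.
Lemma ihi_iadd (R : realType) (P Q : itv R) : ihi (iadd P Q) = ihi P + ihi Q.
Proof. by []. Qed.
Lemma ilo_igH (R : realType) (P Q : itv R) :
  ilo (igH P Q) = Order.min (ilo P - ilo Q) (ihi P - ihi Q).
Proof. by []. Qed.
Lemma ihi_igH (R : realType) (P Q : itv R) :
  ihi (igH P Q) = Order.max (ilo P - ilo Q) (ihi P - ihi Q).
Proof. by []. Qed.

Lemma inorm_lt (R : realType) (P : itv R) (e : R) :
  inorm P < e -> `|ilo P| < e /\ `|ihi P| < e.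
Proof. by rewrite /inorm gt_max => /andP. Qed.

Lemma div_pos (R : realType) (s a b : R) : 0 < s -> s * a <= b -> a <= s^-1 * b.
Proof.
move=> hs h; rewrite -(ler_pM2l hs) mulrA divff ?mul1r //.
by rewrite gt_eqF.
Qed.

Lemma div_neg (R : realType) (s a b : R) : s < 0 -> s * a <= b -> s^-1 * b <= a.
Proof.
move=> hs h; have hs' : 0 < - s by rewrite oppr_gt0.
rewrite -(ler_pM2l hs') !mulNr mulrA divff ?mul1r ?lerN2 //.
by rewrite lt_eqF.
Qed.

Lemma quot (R : realType) (s eps : R) (Ai Ed H : itv R) : s != 0 ->
  ilo H = ilo (iscale s Ai) + ilo (iscale `|s| Ed) ->
  ihi H = ihi (iscale s Ai) + ihi (iscale `|s| Ed) ->
  inorm Ed < eps -> inorm (igH (iscale s^-1 H) Ai) < eps.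
Proof.
move=> s0 hl hh /inorm_lt [e1 e2]; apply/inorm_igH.
have [hs|hs|hs] := ltgtP s 0; last by rewrite hs eqxx in s0.
- have hi : s^-1 < 0 by rewrite invr_lt0.
  have [l1 h1] := iscale_neg _ _ Ai (ltW hs).
  rewrite ltr0_norm // in hl hh.
  have hs' : 0 < - s by rewrite oppr_gt0.
  have [l2 h2] := iscale_pos _ _ Ed (ltW hs').
  have [l3 h3] := iscale_neg _ _ H (ltW hi).
  rewrite l3 h3 hh hl h1 l1 h2 l2 !mulNr -!mulrN.
  rewrite -!mulrDr !mulKf // !(addrC (ilo Ai)) !(addrC (ihi Ai)) !addrK !normrN.
  by [].
- have hi : 0 < s^-1 by rewrite invr_gt0.
  have [l1 h1] := iscale_pos _ _ Ai (ltW hs).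
  rewrite gtr0_norm // in hl hh.
  have [l2 h2] := iscale_pos _ _ Ed (ltW hs).
  have [l3 h3] := iscale_pos _ _ H (ltW hi).
  rewrite l3 h3 hh hl h1 l1 h2 l2.
  by rewrite -!mulrDr !mulKf // !(addrC (ilo Ai)) !(addrC (ihi Ai)) !addrK.
Qed.

Lemma eq_from_close (R : realType) (x y : R) :
  (forall eps : R, 0 < eps -> exists q, `|q - x| < eps /\ `|q - y| < eps) -> x = y.
Proof.
move=> H; apply/eqP; rewrite -subr_eq0 -normr_le0 leNgt; apply/negP => hp.
have [q [/ltr_normlP [h1 h2] /ltr_normlP [h3 h4]]] := H (`|x - y| / 2) (divr_gt0 hp (ltr0Sn _ 1)).
move: hp; case: (ltrgt0P (x - y)) => [hxy|hxy|hxy] _.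
- by rewrite gtr0_norm // in h1 h2 h3 h4; lra.
- by rewrite ltr0_norm // in h1 h2 h3 h4; lra.
- by rewrite hxy normr0 in h1 h2 h3 h4; lra.
Qed.

Lemma grad_A (R : realType) n (X : 'rV[R]_n -> Prop) (F : 'rV[R]_n -> itv R)
  (xb : 'rV[R]_n) (A : 'I_n -> itv R) (E : 'rV[R]_n -> itv R) (delta : R) :
  0 < delta ->
  (forall eps : R, 0 < eps -> exists eta : R, 0 < eta /\
           forall d : 'rV[R]_n, 0 < enorm d < eta -> inorm (E d) < eps) ->
  (forall d : 'rV[R]_n, enorm d < delta ->
          X (xb + d) /\
          igH (F (xb + d)) (F xb) = iadd (idot d A) (iscale (enorm d) (E d))) ->
  gH_gradient X F xb A.
Proof.
move=> hdel HE Hd i eps heps.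
have [eta [heta Heta]] := HE eps heps.
exists (Order.min eta delta); split; first by rewrite lt_min heta hdel.
move=> s /andP [hs0 hs] _.
have hn := enorm_axis _ _ s i.
move: hs; rewrite lt_min => /andP [hse hsd].
have hd1 : enorm (s *: delta_mx ord0 i) < delta by rewrite hn.
have hd2 : 0 < enorm (s *: delta_mx ord0 i) < eta by rewrite hn hs0 hse.
have [_ Heq] := Hd (s *: delta_mx ord0 i) hd1.
have hE := Heta (s *: delta_mx ord0 i) hd2.
have [a1 a2] := idot_axis _ _ s i A.
apply: quot => //.
- by rewrite -normr_gt0.
- by rewrite Heq ilo_iadd a1 hn.
- by rewrite Heq ihi_iadd a2 hn.
- by [].
Qed.

Lemma conv_part (R : realType) n (X : 'rV[R]_n -> Prop) (F : 'rV[R]_n -> itv R)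
  (xb : 'rV[R]_n) (A : 'I_n -> itv R) (E : 'rV[R]_n -> itv R) (delta : R) :
  convex_ivf X F -> X xb -> 0 < delta ->
  (forall eps : R, 0 < eps -> exists eta : R, 0 < eta /\
           forall d : 'rV[R]_n, 0 < enorm d < eta -> inorm (E d) < eps) ->
  (forall d : 'rV[R]_n, enorm d < delta ->
          X (xb + d) /\
          igH (F (xb + d)) (F xb) = iadd (idot d A) (iscale (enorm d) (E d))) ->
  forall x, X x -> ile (idot (x - xb) A) (igH (F x) (F xb)).
Proof.
move=> Hconv HXxb hdel HE Hd x hx.
set d := x - xb.
have hxd : xb + d = x by rewrite /d addrC subrK.
have nd0 : 0 <= enorm d by exact: sqrtr_ge0.
rewrite /ile ilo_igH ihi_igH.
case: (eqVneq (enorm d) 0) => [h0|hn0].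
  have hd0 : enorm d < delta by rewrite h0.
  have [_ Heq] := Hd d hd0.
  rewrite hxd h0 in Heq.
  have [l h] := iscale_pos _ _ (E d) (lexx 0).
  have e1 := congr1 (@ilo R) Heq; have e2 := congr1 (@ihi R) Heq.
  rewrite ilo_igH ilo_iadd l mul0r addr0 in e1.
  rewrite ihi_igH ihi_iadd h mul0r addr0 in e2.
  by rewrite e1 e2.
have hn : 0 < enorm d by rewrite lt_def hn0 nd0.
set nd := enorm d in hn hn0 nd0 *.
suff core : forall e : R, 0 < e ->
  ilo (idot d A) - e <= Order.min (ilo (F x) - ilo (F xb)) (ihi (F x) - ihi (F xb)) /\
  ihi (idot d A) - e <= Order.max (ilo (F x) - ilo (F xb)) (ihi (F x) - ihi (F xb)).
  split; apply/ler_addgt0Pr => e he; have [c1 c2] := core e he; lra.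
move=> e he.
have heps : 0 < e / nd by rewrite divr_gt0.
have [eta [heta Heta]] := HE (e / nd) heps.
set m := Order.min eta delta.
have hm : 0 < m by rewrite lt_min heta hdel.
have hme : m <= eta by rewrite ge_min lexx.
have hmd : m <= delta by rewrite ge_min lexx orbT.
set t := Order.min 1 (m / (2 * nd)).
have ht0 : 0 < t by rewrite lt_min ltr01 divr_gt0 // mulr_gt0.
have ht1 : t <= 1 by rewrite ge_min lexx.
have htm : t * nd < m.
  have h1 : t <= m / (2 * nd) by rewrite ge_min lexx orbT.
  have h2 : t * nd <= m / (2 * nd) * nd by rewrite ler_wpM2r.
  have h3 : m / (2 * nd) * nd = m / 2 by field.
  lra.
set d' := t *: d.
have hn' : enorm d' = t * nd by rewrite /d' enorm_scale // ltW.
have hd'1 : enorm d' < delta by rewrite hn'; lra.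
have hd'2 : 0 < enorm d' < eta by rewrite hn' mulr_gt0 //=; lra.
have [_ Heq] := Hd d' hd'1.
have [el eh] := inorm_lt _ _ _ (Heta d' hd'2).
have hpt : t *: x + (1 - t) *: xb = xb + d'.
  by rewrite /d' /d scalerBr scalerBl scale1r addrCA.
have ht01 : 0 <= t <= 1 by rewrite ltW.
have [c1 c2] := Hconv x xb t hx HXxb ht01.
rewrite hpt ilo_iadd ihi_iadd in c1 c2.
have [l1 h1] := iscale_pos _ _ (F x) (ltW ht0).
have h1t : 0 <= 1 - t by lra.
have [l2 h2] := iscale_pos _ _ (F xb) h1t.
rewrite l1 l2 in c1; rewrite h1 h2 in c2.
rewrite hn' in Heq.
have e1 := congr1 (@ilo R) Heq; have e2 := congr1 (@ihi R) Heq.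
have [l3 h3] := idot_scale _ _ _ d A (ltW ht0).
have [l4 h4] := iscale_pos _ _ (E d') (ltW (mulr_gt0 ht0 hn)).
rewrite ilo_igH ilo_iadd l3 l4 in e1.
rewrite ihi_igH ihi_iadd h3 h4 in e2.
have ndeps : nd * (e / nd) = e by rewrite mulrCA mulfV // mulr1.
have hul : `|nd * ilo (E d')| < e.
  by rewrite normrM gtr0_norm // -ndeps ltr_pM2l.
have huh : `|nd * ihi (E d')| < e.
  by rewrite normrM gtr0_norm // -ndeps ltr_pM2l.
move/ltr_normlP: hul => [hul1 hul2]; move/ltr_normlP: huh => [huh1 huh2].
have hpl : 0 < t * (nd * ilo (E d') + e) by apply: mulr_gt0 => //; lra.
have hph : 0 < t * (nd * ihi (E d') + e) by apply: mulr_gt0 => //; lra.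
set a := ilo (F (xb + d')) in c1 c2 e1 e2 *; set b := ihi (F (xb + d')) in c1 c2 e1 e2 *.
have mn1 : Order.min (a - ilo (F xb)) (b - ihi (F xb)) <= a - ilo (F xb) by rewrite ge_min lexx.
have mn2 : Order.min (a - ilo (F xb)) (b - ihi (F xb)) <= b - ihi (F xb) by rewrite ge_min lexx orbT.
have mx1 : a - ilo (F xb) <= Order.max (a - ilo (F xb)) (b - ihi (F xb)) by rewrite le_max lexx.
have mx2 : b - ihi (F xb) <= Order.max (a - ilo (F xb)) (b - ihi (F xb)) by rewrite le_max lexx orbT.
split.
  have k : t * (ilo (idot d A) - e) <= t * Order.min (ilo (F x) - ilo (F xb)) (ihi (F x) - ihi (F xb)).
    rewrite (minr_pMr _ _ (ltW ht0)) le_min; apply/andP; split; lra.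
  by rewrite ler_pM2l in k.
have k : t * (ihi (idot d A) - e) <= t * Order.max (ilo (F x) - ilo (F xb)) (ihi (F x) - ihi (F xb)).
  rewrite (maxr_pMr _ _ (ltW ht0)).
  have hmax : t * (ihi (idot d A) - e) <= Order.max (a - ilo (F xb)) (b - ihi (F xb)) by lra.
  apply: (le_trans hmax); rewrite ge_max; apply/andP; split; rewrite le_max; apply/orP; [left|right]; lra.
by rewrite ler_pM2l in k.
Qed.
Arguments inorm_igH {R A B e}.

Lemma common_Q (R : realType) n (X : 'rV[R]_n -> Prop) (F : 'rV[R]_n -> itv R)
  (xb : 'rV[R]_n) (A : 'I_n -> itv R) (E : 'rV[R]_n -> itv R) (delta : R)
  (g1 g2 : 'I_n -> itv R) :
  0 < delta ->
  (forall d : 'rV[R]_n, enorm d < delta ->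
          X (xb + d) /\
          igH (F (xb + d)) (F xb) = iadd (idot d A) (iscale (enorm d) (E d))) ->
  gH_gradient X F xb g1 -> gH_gradient X F xb g2 ->
  forall i, g1 i = g2 i.
Proof.
move=> hdel Hd H1 H2 i.
have key : forall eps : R, 0 < eps -> exists Q : itv R,
    inorm (igH Q (g1 i)) < eps /\ inorm (igH Q (g2 i)) < eps.
  move=> eps heps.
  have [e1 [he1 He1]] := H1 i eps heps.
  have [e2 [he2 He2]] := H2 i eps heps.
  set m := Order.min (Order.min e1 e2) delta.
  have hm : 0 < m by rewrite !lt_min he1 he2 hdel.
  have hm1 : m <= e1 by rewrite !ge_min lexx.
  have hm2 : m <= e2 by rewrite !ge_min lexx orbT.
  have hm3 : m <= delta by rewrite ge_min lexx orbT.
  set s := m / 2.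
  have hs : `|s| = m / 2 by rewrite gtr0_norm // divr_gt0.
  have hsd : enorm (s *: delta_mx ord0 i) < delta by rewrite enorm_axis hs; lra.
  have [hX _] := Hd _ hsd.
  exists (iscale s^-1 (igH (F (xb + s *: delta_mx ord0 i)) (F xb))); split.
    by apply: He1 => //; rewrite hs divr_gt0 //=; lra.
  by apply: He2 => //; rewrite hs divr_gt0 //=; lra.
apply: itv_eq; apply: eq_from_close => eps heps;
  have [Q [k1 k2]] := key eps heps;
  have [q1 q2] := iffLR inorm_igH k1; have [q3 q4] := iffLR inorm_igH k2.
  by exists (ilo Q).
by exists (ihi Q).
Qed.

Lemma sub_to_eq (R : realType) n (X : 'rV[R]_n -> Prop) (F : 'rV[R]_n -> itv R)
  (xb : 'rV[R]_n) (A : 'I_n -> itv R) (E : 'rV[R]_n -> itv R) (delta : R)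
  (g G : 'I_n -> itv R) :
  0 < delta ->
  (forall d : 'rV[R]_n, enorm d < delta ->
          X (xb + d) /\
          igH (F (xb + d)) (F xb) = iadd (idot d A) (iscale (enorm d) (E d))) ->
  gH_gradient X F xb g -> gH_subgradient X F xb G ->
  forall i, G i = g i.
Proof.
move=> hdel Hd Hg HG i.
have key : forall eps : R, 0 < eps ->
   [/\ ilo (G i) <= ilo (g i) + eps, ilo (g i) <= ilo (G i) + eps,
       ihi (G i) <= ihi (g i) + eps & ihi (g i) <= ihi (G i) + eps].
  move=> eps heps.
  have [e1 [he1 He1]] := Hg i eps heps.
  set m := Order.min e1 delta.
  have hm : 0 < m by rewrite !lt_min he1 hdel.
  have hm1 : m <= e1 by rewrite !ge_min lexx.
  have hm3 : m <= delta by rewrite ge_min lexx orbT.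
  set s := m / 2.
  have hs0 : 0 < s by rewrite divr_gt0.
  have hs : `|s| = m / 2 by rewrite gtr0_norm.
  have hs' : `|- s| = m / 2 by rewrite normrN.
  have hsd : enorm (s *: delta_mx ord0 i) < delta by rewrite enorm_axis hs; lra.
  have hsd' : enorm ((- s) *: delta_mx ord0 i) < delta by rewrite enorm_axis hs'; lra.
  have [hX _] := Hd _ hsd.
  have [hX' _] := Hd _ hsd'.
  have hse1 : 0 < `|s| < e1 by rewrite hs divr_gt0 //=; lra.
  have hse2 : 0 < `|- s| < e1 by rewrite hs' divr_gt0 //=; lra.
  have [q1 q2] := iffLR inorm_igH (He1 s hse1 hX).
  have [q3 q4] := iffLR inorm_igH (He1 (- s) hse2 hX').
  have [c1 c2] := HG _ hX; have [c3 c4] := HG _ hX'.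
  have sxb : forall v : 'rV[R]_n, xb + v - xb = v by move=> v; rewrite addrC addKr.
  rewrite !sxb in c1 c2 c3 c4.
  have [a1 a2] := idot_axis _ _ s i G; have [a3 a4] := idot_axis _ _ (- s) i G.
  rewrite a1 in c1; rewrite a2 in c2; rewrite a3 in c3; rewrite a4 in c4.
  have [l1 h1] := iscale_pos _ _ (G i) (ltW hs0).
  have hn : - s <= 0 by rewrite oppr_le0 ltW.
  have [l2 h2] := iscale_neg _ _ (G i) hn.
  rewrite l1 in c1; rewrite h1 in c2; rewrite l2 in c3; rewrite h2 in c4.
  have hsi : 0 < s^-1 by rewrite invr_gt0.
  have hsn : - s < 0 by rewrite oppr_lt0.
  have hsi' : (- s)^-1 <= 0 by rewrite invr_le0.
  have [l3 h3] := iscale_pos _ _ (igH (F (xb + s *: delta_mx ord0 i)) (F xb)) (ltW hsi).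
  have [l4 h4] := iscale_neg _ _ (igH (F (xb + (- s) *: delta_mx ord0 i)) (F xb)) hsi'.
  rewrite l3 in q1; rewrite h3 in q2; rewrite l4 in q3; rewrite h4 in q4.
  have d1 := div_pos _ _ _ _ hs0 c1; have d2 := div_pos _ _ _ _ hs0 c2.
  have d3 := div_neg _ _ _ _ hsn c3; have d4 := div_neg _ _ _ _ hsn c4.
  move: q1 q2 q3 q4 => /ltr_normlP [q1 q1'] /ltr_normlP [q2 q2'] /ltr_normlP [q3 q3'] /ltr_normlP [q4 q4'].
  split.
  - by clear -d1 q1'; lra.
  - by clear -d4 q3; lra.
  - by clear -d2 q2'; lra.
  - by clear -d3 q4; lra.
apply: itv_eq; apply/le_anti/andP; split; apply/ler_addgt0Pr => e he;
  by have [] := key e he.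
Qed.

Theorem mainTheorem6 (R : realType) (n : nat) (X : 'rV[R]_n -> Prop)
  (F : 'rV[R]_n -> itv R) (xb : 'rV[R]_n) :
  (exists x, X x) ->
  convex_set X ->
  convex_ivf X F ->
  X xb ->
  gH_differentiable X F xb ->
  exists g : 'I_n -> itv R,
    gH_gradient X F xb g /\
    (forall g', gH_gradient X F xb g' ->
       forall G, gH_subgradient X F xb G <-> G = g').
Proof.
move=> _ _ Hconv HXxb [A [E [delta [hdel HE Hd]]]].
have gA := grad_A _ _ _ _ _ _ _ _ hdel HE Hd.
exists A; split => // g' hg' G; split.
  move=> hG; apply: functional_extensionality => i.
  exact: (sub_to_eq _ _ _ _ _ _ _ _ _ _ hdel Hd hg' hG).
move=> ->.
have -> : g' = A.
  apply: functional_extensionality => i; exact: (common_Q _ _ _ _ _ _ _ _ _ _ hdel Hd hg' gA).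
move=> x hx; exact: (conv_part _ _ _ _ _ _ _ _ Hconv HXxb hdel HE Hd).
Qed.
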